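(* Let $L$ be a finite-dimensional pure, nonnilpotent, solvable Lie algebra over $\mathbb{C}$ of breadth $2$ such that $\dim[L,L]=2$ and $\dim L^k=2$ for all integers $k\geq 2$. Then the following are equivalent: (1) $C_L([L,L])\neq\{0\}$; (2) $[L,L]$ is an abelian ideal of $L$; (3) $[L,L]\subseteq C_L([L,L])$.
   Context: For $x\in L$, $b(x)=\mathrm{rank}(\mathrm{ad}_x)$ and the breadth of $L$ is $b(L)=\max\{b(x)\mid x\in L\}$. $L$ is pure if it has no abelian ideal as a direct summand; equivalently $Z(L)\subseteq[L,L]$, where $Z(L)$ is the center. The lower central series is indexed by $L^0=L$, $L^1=[L,L]$, $L^k=[L,L^{k-1}]$ for $k\geq 2$. $C_L(S)$ denotes the centralizer of a subset $S$ in $L$. *)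

(* Defs.v *)
From HB Require Import structures.
From mathcomp Require Import all_boot all_order all_algebra.
From mathcomp.real_closed Require Import complex.
From mathcomp Require Import reals Rstruct.
Set Implicit Arguments. Unset Strict Implicit. Unset Printing Implicit Defensive.
Import Order.TTheory GRing.Theory Num.Theory.
Local Open Scope ring_scope.

Definition Cfield : fieldType := (complex Rdefinitions.R).

Section Lie.
Variable (F : fieldType) (V : vectType F).


Definition lie_bracket (br : V -> V -> V) : Prop :=
  [/\ (forall (a : F) x y z, br (a *: x + y) z = a *: br x z + br y z),
      (forall (a : F) x y z, br x (a *: y + z) = a *: br x y + br x z),
      (forall x, br x x = 0) &
      (forall x y z, br x (br y z) + br y (br z x) + br z (br x y) = 0)].

Variable br : V -> V -> V.

(* [U, W] = span of all [u, w], u in U, w in W (spanned by brackets of basis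
   vectors, by bilinearity). *)
Definition lie_brs (U W : {vspace V}) : {vspace V} :=
  (\sum_(i < \dim U) \sum_(j < \dim W)
      <[br (vbasis U)`_i (vbasis W)`_j]>)%VS.

Definition derived_alg : {vspace V} := lie_brs fullv fullv.

Fixpoint lcs (k : nat) : {vspace V} :=
  if k is k'.+1 then lie_brs fullv (lcs k') else fullv.

Fixpoint dser (k : nat) : {vspace V} :=
  if k is k'.+1 then lie_brs (dser k') (dser k') else fullv.

Definition nilpotent_lie : Prop := exists k, lcs k = 0%VS.
Definition solvable_lie : Prop := exists k, dser k = 0%VS.

Definition ad (x : V) : 'End(V) := linfun (br x).
Definition lbreadth (x : V) : nat := \dim (limg (ad x)).
Definition breadth_is (n : nat) : Prop :=
  (exists x, lbreadth x = n) /\ (forall x, (lbreadth x <= n)%N).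

Definition in_center (z : V) : Prop := forall y, br z y = 0.
Definition in_centralizer (S : {vspace V}) (x : V) : Prop :=
  forall y, y \in S -> br x y = 0.

Definition pure_lie : Prop := forall z, in_center z -> z \in derived_alg.

Definition is_ideal (I : {vspace V}) : Prop :=
  forall x y, y \in I -> br x y \in I.
Definition is_abelian (I : {vspace V}) : Prop :=
  forall x y, x \in I -> y \in I -> br x y = 0.

End Lie.

(* Main.v *)
From Stdlib Require Import Classical.
Require Import Defs.
From HB Require Import structures.
From mathcomp Require Import all_boot all_order all_algebra.
Import GRing.Theory.
Local Open Scope ring_scope.

Section Aux.
Variable (F : fieldType) (V : vectType F) (br : V -> V -> V).
Hypothesis hbr : lie_bracket br.

Lemma brDl x y z : br (x + y) z = br x z + br y z.
Proof. have [h _ _ _] := hbr. by have := h 1 x y z; rewrite !scale1r. Qed.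
Lemma br0l z : br 0 z = 0.
Proof. by apply: (addrI (br 0 z)); rewrite addr0 -brDl addr0. Qed.
Lemma brZl a x z : br (a *: x) z = a *: br x z.
Proof. have [h _ _ _] := hbr. by have := h a x 0 z; rewrite br0l !addr0. Qed.
Lemma brDr x y z : br z (x + y) = br z x + br z y.
Proof. have [_ h _ _] := hbr. by have := h 1 z x y; rewrite !scale1r. Qed.
Lemma br0r z : br z 0 = 0.
Proof. by apply: (addrI (br z 0)); rewrite addr0 -brDr addr0. Qed.
Lemma brZr a x z : br z (a *: x) = a *: br z x.
Proof. have [_ h _ _] := hbr. by have := h a z x 0; rewrite br0r !addr0. Qed.
Lemma brN x y : br x y = - br y x.
Proof.
have [_ _ h _] := hbr. apply/eqP; rewrite -addr_eq0.
by have := h (x + y); rewrite brDl !brDr !h add0r addr0 => ->.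
Qed.

Lemma memD x y : br x y \in derived_alg br.
Proof.
rewrite (coord_vbasis (memvf x)) (coord_vbasis (memvf y)).
rewrite (big_morph (fun u => br u _) (id1 := 0) (op1 := +%R) (fun a b => brDl a b _) (br0l _)).
apply: memv_suml => i _; rewrite brZl; apply: memvZ.
rewrite (big_morph (fun u => br _ u) (id1 := 0) (op1 := +%R) (fun a b => brDr a b _) (br0r _)).
apply: memv_suml => j _; rewrite brZr; apply: memvZ.
rewrite /derived_alg /lie_brs.
apply: (subvP (sumv_sup i _ _)) => //.
apply: (subvP (sumv_sup j _ _)) => //.
exact: memv_line.
Qed.

Lemma abel_of_center (D : {vspace V}) z : \dim D = 2%N -> z \in D -> z != 0 ->
  (forall d, d \in D -> br z d = 0) ->
  forall u v, u \in D -> v \in D -> br u v = 0.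
Proof.
move=> dD zD z0 hz u v uD vD.
have hz' d : d \in D -> br d z = 0 by move=> /hz e; rewrite brN e oppr0.
case: (boolP (u \in <[z]>%VS)) => [/vlineP [k ->]|uz].
  by rewrite brZl hz // scaler0.
have fr : free [:: u; z] by rewrite free_cons span_seq1 uz seq1_free.
have eq : <<[:: u; z]>>%VS = D.
  apply/eqP; rewrite eqEdim dD (eqP fr) leqnn andbT.
  by apply/span_subvP => w; rewrite !inE => /orP [] /eqP ->.
move: vD; rewrite -eq span_cons span_seq1 => /memv_addP [a /vlineP [k ->] [b /vlineP [l ->] ->]].
have [_ _ h _] := hbr.
by rewrite brDr !brZr h hz' // !scaler0 addr0.
Qed.

End Aux.
Arguments brDl {F V br}.
Arguments br0l {F V br}.
Arguments brZl {F V br}.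
Arguments brDr {F V br}.
Arguments br0r {F V br}.
Arguments brZr {F V br}.
Arguments brN {F V br}.
Arguments memD {F V br}.
Arguments abel_of_center {F V br}.

Theorem proposition3p6 (V : vectType Cfield) (br : V -> V -> V) :
  lie_bracket br ->
  pure_lie br -> ~ nilpotent_lie br -> solvable_lie br ->
  breadth_is br 2 ->
  \dim (derived_alg br) = 2%N ->
  (forall k, (2 <= k)%N -> \dim (lcs br k) = 2%N) ->
  [/\ ((exists x, x != 0 /\ in_centralizer br (derived_alg br) x) <->
        (is_ideal br (derived_alg br) /\ is_abelian br (derived_alg br))),
      ((is_ideal br (derived_alg br) /\ is_abelian br (derived_alg br)) <->
        (forall x, x \in derived_alg br -> in_centralizer br (derived_alg br) x)) &
      ((exists x, x != 0 /\ in_centralizer br (derived_alg br) x) <->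
        (forall x, x \in derived_alg br -> in_centralizer br (derived_alg br) x))].
Proof.
move=> hbr hpure _ _ _ dD _.
set D := derived_alg br.
have id : is_ideal br D by move=> x y _; exact: memD.
have P13 : (exists x, x != 0 /\ in_centralizer br D x) ->
    (forall x, x \in D -> in_centralizer br D x).
  move=> [x [x0 hx]] u uD v vD.
  have [z [zD z0 hz]] : exists z, [/\ z \in D, z != 0 & forall d, d \in D -> br z d = 0].
    case: (classic (forall y, br x y = 0)) => [hc|].
      by exists x; split => //; apply: hpure.
    move=> /not_all_ex_not [y hy].
    exists (br x y); split; [exact: memD| by apply/eqP|].
    move=> d ddD; have [_ _ _ jac] := hbr.
    have := jac x y d.
    rewrite (hx _ (memD hbr y d)) (brN hbr d x) (hx _ ddD) oppr0 (br0r hbr) !add0r => e.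
    by rewrite (brN hbr) e oppr0.
  exact: (abel_of_center hbr _ _ dD zD z0 hz u v uD vD).
have P31 : (forall x, x \in D -> in_centralizer br D x) ->
    (exists x, x != 0 /\ in_centralizer br D x).
  move=> h; exists (vpick D); split; last by apply: h; exact: memv_pick.
  by rewrite vpick0; apply/eqP => e; move: dD; rewrite -/D e dimv0.
split; split.
- by move=> /P13 h; split => // x y xD yD; apply: h.
- by move=> [_ h]; apply: P31 => x xD y yD; apply: h.
- by move=> [_ h] x xD y yD; apply: h.
- by move=> h; split => // x y xD yD; apply: h.
- exact: P13.
- exact: P31.
Qed.
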